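(* Let $X$ and $Y$ be discrete random variables taking values in a finite set $\mathcal{A}$ with $|\mathcal{A}| = M \ge 2$, and suppose $d_{\mathrm{TV}}(X,Y) > 0$. Define $$\alpha \triangleq \frac{d_{\mathrm{loc}}(X,Y)}{d_{\mathrm{TV}}(X,Y)}$$ (so that $\alpha \in [\tfrac{2}{M}, 1]$). Then $$|H(X)-H(Y)| \le d_{\mathrm{TV}}(X,Y)\,\log(M\alpha - 1) + h\bigl(d_{\mathrm{TV}}(X,Y)\bigr).$$ Furthermore, if the probability mass functions satisfy $P_Y(a) \ge \tfrac12 P_X(a)$ and $P_X(a) \ge \tfrac12 P_Y(a)$ for every $a \in \mathcal{A}$ (i.e., $P_X$ and $P_Y$ have the same support and $\tfrac12 \le P_X(a)/P_Y(a) \le 2$ on it), then the bound tightens to $$|H(X)-H(Y)| \le d_{\mathrm{TV}}(X,Y)\,\log\Bigl(\frac{M\alpha - 1}{4}\Bigr) + h\bigl(d_{\mathrm{TV}}(X,Y)\bigr).$$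
   Context: For discrete random variables $X,Y$ on a set $\mathcal{A}$ with probability mass functions $P_X,P_Y$, the local distance is $d_{\mathrm{loc}}(X,Y) = \sup_{u\in\mathcal{A}} |P_X(u)-P_Y(u)|$ and the total variation distance is $d_{\mathrm{TV}}(X,Y) = \frac12\sum_{u\in\mathcal{A}}|P_X(u)-P_Y(u)|$. All logarithms are natural and entropies are in nats: $H(X) = -\sum_u P_X(u)\log P_X(u)$ with $0\log 0 = 0$. $h(x) = -x\log x-(1-x)\log(1-x)$ denotes the binary entropy function on $[0,1]$. *)

(* Defs.v *)
From Stdlib Require Import Reals List.
Open Scope R_scope.

(* The finite alphabet A with |A| = M is modelled as {0, ..., M-1}. *)
Definition sumR (M : nat) (f : nat -> R) : R :=
  fold_right Rplus 0 (map f (seq 0 M)).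

Definition is_pmf (M : nat) (P : nat -> R) : Prop :=
  (forall i, (i < M)%nat -> 0 <= P i) /\ sumR M P = 1.

(* local distance: max over the alphabet of |P u - Q u| (values are >= 0,
   so starting the fold at 0 is harmless). *)
Definition dloc (M : nat) (P Q : nat -> R) : R :=
  fold_right Rmax 0 (map (fun i => Rabs (P i - Q i)) (seq 0 M)).

Definition dTV (M : nat) (P Q : nat -> R) : R :=
  / 2 * sumR M (fun i => Rabs (P i - Q i)).

(* - x log x, with 0 log 0 = 0 (natural log, nats). *)
Definition negxlogx (x : R) : R :=
  if Rlt_dec 0 x then - (x * ln x) else 0.

Definition entropy (M : nat) (P : nat -> R) : R :=
  sumR M (fun i => negxlogx (P i)).

Definition hbin (x : R) : R := negxlogx x + negxlogx (1 - x).

(* Main.v *)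
Require Import Defs.
From Stdlib Require Import Reals List.
From Stdlib Require Import Lra Lia.
Open Scope R_scope.

Lemma sumR_S M f : sumR (S M) f = sumR M f + f M.
Proof.
  unfold sumR. rewrite seq_S, map_app, fold_right_app. simpl.
  generalize (map f (seq 0 M)). intro l. induction l; simpl; lra.
Qed.

Lemma sumR_0 f : sumR 0 f = 0.
Proof. reflexivity. Qed.

Lemma sumR_le M f g : (forall i, (i < M)%nat -> f i <= g i) -> sumR M f <= sumR M g.
Proof.
  induction M; intros H. rewrite !sumR_0; lra.
  rewrite !sumR_S. assert (f M <= g M) by (apply H; lia).
  assert (sumR M f <= sumR M g) by (apply IHM; intros; apply H; lia). lra.
Qed.

Lemma sumR_ext M f g : (forall i, (i < M)%nat -> f i = g i) -> sumR M f = sumR M g.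
Proof.
  intros H; apply Rle_antisym; apply sumR_le; intros i Hi; rewrite (H i Hi); lra.
Qed.

Lemma sumR_plus M f g : sumR M (fun i => f i + g i) = sumR M f + sumR M g.
Proof. induction M. rewrite !sumR_0; lra. rewrite !sumR_S, IHM; lra. Qed.

Lemma sumR_opp M f : sumR M (fun i => - f i) = - sumR M f.
Proof. induction M. rewrite !sumR_0; lra. rewrite !sumR_S, IHM; lra. Qed.

Lemma sumR_scal M c f : sumR M (fun i => c * f i) = c * sumR M f.
Proof. induction M. rewrite !sumR_0; lra. rewrite !sumR_S, IHM; lra. Qed.

Lemma sumR_const M c : sumR M (fun _ => c) = INR M * c.
Proof. induction M. rewrite sumR_0; simpl; lra. rewrite sumR_S, IHM, S_INR; lra. Qed.

Lemma sumR_term_le M f j : (forall i, (i < M)%nat -> 0 <= f i) -> (j < M)%nat -> f j <= sumR M f.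
Proof.
  induction M; intros H Hj. lia.
  rewrite sumR_S. assert (0 <= sumR M f).
  { replace 0 with (sumR M (fun _ => 0)) by (rewrite sumR_const; lra).
    apply sumR_le; intros; apply H; lia. }
  destruct (Nat.eq_dec j M). subst. lra.
  assert (f j <= sumR M f) by (apply IHM; [intros; apply H; lia| lia]).
  assert (0 <= f M) by (apply H; lia). lra.
Qed.

Lemma fold_max_ge l x : In x l -> x <= fold_right Rmax 0 l.
Proof.
  induction l; simpl. tauto. intros [<-|H].
  apply Rmax_l. eapply Rle_trans. apply IHl; auto. apply Rmax_r.
Qed.

Lemma dloc_ge M P Q i : (i < M)%nat -> Rabs (P i - Q i) <= dloc M P Q.
Proof.
  intros Hi. unfold dloc. apply fold_max_ge. apply in_map_iff.
  exists i; split; auto. apply in_seq; lia.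
Qed.

Lemma ln_le_mono x y : 0 < x -> x <= y -> ln x <= ln y.
Proof. intros Hx [H|H]. left; apply ln_increasing; auto. subst; lra. Qed.

Lemma ln_le_sub1 u : 0 < u -> ln u <= u - 1.
Proof. intros Hu. pose proof (exp_ineq1_le (ln u)). rewrite exp_ln in H; lra. Qed.

Lemma ln_nonpos x : x <= 1 -> ln x <= 0.
Proof.
  intros H. destruct (Rlt_dec 0 x).
  - rewrite <- ln_1. apply ln_le_mono; lra.
  - unfold ln. destruct (Rlt_dec 0 x); [contradiction| lra].
Qed.

Lemma nx_pos x : 0 < x -> negxlogx x = - (x * ln x).
Proof. intros H; unfold negxlogx; destruct (Rlt_dec 0 x); [auto|contradiction]. Qed.

Lemma nx_0 : negxlogx 0 = 0.
Proof. unfold negxlogx; destruct (Rlt_dec 0 0); lra. Qed.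

Lemma nx_eq x : 0 <= x -> negxlogx x = - (x * ln x).
Proof. intros [H|H]. apply nx_pos; auto. subst; rewrite nx_0; lra. Qed.

Lemma ln1t t : 0 <= t <= 1 -> t * ln 2 <= ln (1 + t).
Proof.
  intros Ht. set (z := t * ln 2).
  assert (E1 : 1 + (ln 2 - z) <= exp (ln 2 - z)) by apply exp_ineq1_le.
  assert (E2 : 1 + (0 - z) <= exp (0 - z)) by apply exp_ineq1_le.
  assert (X1 : exp (ln 2) = exp z * exp (ln 2 - z)) by (rewrite <- exp_plus; f_equal; ring).
  assert (X2 : exp 0 = exp z * exp (0 - z)) by (rewrite <- exp_plus; f_equal; ring).
  rewrite exp_ln in X1 by lra. rewrite exp_0 in X2.
  assert (Ez : 0 < exp z) by apply exp_pos.
  assert (A1 : 0 <= t * (exp z * (exp (ln 2 - z) - (1 + (ln 2 - z))))).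
  { apply Rmult_le_pos; [lra|]. apply Rmult_le_pos; lra. }
  assert (A2 : 0 <= (1 - t) * (exp z * (exp (0 - z) - (1 + (0 - z))))).
  { apply Rmult_le_pos; [lra|]. apply Rmult_le_pos; lra. }
  assert (exp z <= 1 + t) by (unfold z in *; nra).
  rewrite <- (ln_exp z). apply ln_le_mono; auto.
Qed.
Definition indR (x : R) : R := if Rlt_dec 0 x then 1 else 0.

Lemma lemA m p : 0 <= m -> 0 <= p -> negxlogx (m + p) <= negxlogx m + negxlogx p.
Proof.
  intros [Hm|Hm] [Hp|Hp]; try (subst; rewrite ?Rplus_0_l, ?Rplus_0_r, nx_0; lra).
  rewrite !nx_pos by lra.
  assert (ln m <= ln (m+p)) by (apply ln_le_mono; lra).
  assert (ln p <= ln (m+p)) by (apply ln_le_mono; lra). nra.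
Qed.

Lemma lemA2 m p : 0 <= p -> p <= m ->
  negxlogx (m + p) <= negxlogx m + negxlogx p - 2 * ln 2 * p.
Proof.
  intros [Hp|Hp] Hpm; [|subst; rewrite Rplus_0_r, nx_0; lra].
  rewrite !nx_pos by lra.
  assert (H1 : ln 2 + ln p <= ln (m+p)) by (rewrite <- ln_mult by lra; apply ln_le_mono; lra).
  assert (H2 : ln (m + p) = ln m + ln (1 + p / m)).
  { rewrite <- ln_mult. f_equal. field. lra. lra.
    assert (0 < p / m) by (apply Rdiv_lt_0_compat; lra). lra. }
  assert (H3 : (p / m) * ln 2 <= ln (1 + p / m)).
  { apply ln1t. split. left; apply Rdiv_lt_0_compat; lra.
    apply Rmult_le_reg_r with m. lra. field_simplify; lra. }
  assert (H4 : m * ((p/m) * ln 2) = p * ln 2) by (field; lra).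
  assert (m * ((p/m) * ln 2) <= m * ln (1 + p/m)) by (apply Rmult_le_compat_l; lra).
  nra.
Qed.

Lemma lemB m q d : 0 <= m -> m <= 1 - d -> 0 <= q -> q <= d -> 0 < d -> d <= 1 ->
  negxlogx m + negxlogx q - negxlogx (m + q) <= m * (- ln (1 - d)) + q * (- ln d).
Proof.
  intros Hm Hm1 Hq Hqd Hd Hd1.
  assert (L1 : ln (1 - d) <= 0) by (apply ln_nonpos; lra).
  assert (L2 : ln d <= 0) by (apply ln_nonpos; lra).
  destruct Hm as [Hm|Hm]; [|subst; rewrite Rplus_0_l, nx_0; nra].
  destruct Hq as [Hq|Hq]; [|subst; rewrite Rplus_0_r, nx_0; nra].
  rewrite !nx_pos by lra.
  assert (U1 : ln ((1 - d) * (m + q) / m) <= (1 - d) * (m + q) / m - 1)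
    by (apply ln_le_sub1; apply Rdiv_lt_0_compat; nra).
  assert (U2 : ln (d * (m + q) / q) <= d * (m + q) / q - 1)
    by (apply ln_le_sub1; apply Rdiv_lt_0_compat; nra).
  unfold Rdiv in U1, U2.
  rewrite !ln_mult, ln_Rinv in U1 by (try apply Rinv_0_lt_compat; nra).
  rewrite !ln_mult, ln_Rinv in U2 by (try apply Rinv_0_lt_compat; nra).
  assert (E1 : m * ((1 - d) * (m + q) * / m - 1) = (1-d)*(m+q) - m) by (field; lra).
  assert (E2 : q * (d * (m + q) * / q - 1) = d*(m+q) - q) by (field; lra).
  assert (F1 : m * (ln (1 - d) + ln (m + q) + - ln m) <= m * ((1 - d) * (m + q) * / m - 1))
    by (apply Rmult_le_compat_l; lra).
  assert (F2 : q * (ln d + ln (m + q) + - ln q) <= q * (d * (m + q) * / q - 1))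
    by (apply Rmult_le_compat_l; lra).
  nra.
Qed.

Lemma lemC1 p t : 0 <= p -> 0 < t -> negxlogx p <= indR p / t - p + p * ln t.
Proof.
  intros [Hp|Hp] Ht; unfold indR.
  - destruct (Rlt_dec 0 p); [|lra]. rewrite nx_pos by lra.
    assert (U : ln (/ (t * p)) <= / (t * p) - 1) by (apply ln_le_sub1; apply Rinv_0_lt_compat; nra).
    rewrite ln_Rinv, ln_mult in U by nra.
    assert (E : p * (/ (t * p) - 1) = 1 / t - p) by (field; lra).
    assert (p * (- (ln t + ln p)) <= p * (/ (t * p) - 1)) by (apply Rmult_le_compat_l; lra).
    nra.
  - subst. destruct (Rlt_dec 0 0); [lra|]. rewrite nx_0. unfold Rdiv. lra.
Qed.

Lemma lemC2 q D : 0 <= q -> q <= D -> 0 < D -> q * (- ln D) <= negxlogx q.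
Proof.
  intros [Hq|Hq] HqD HD; [|subst; rewrite nx_0; lra].
  rewrite nx_pos by lra. assert (ln q <= ln D) by (apply ln_le_mono; lra). nra.
Qed.

Lemma indR_le x D : 0 <= x -> x <= D -> x <= indR x * D.
Proof. intros. unfold indR. destruct (Rlt_dec 0 x); lra. Qed.

Lemma indR_range x : 0 <= indR x <= 1.
Proof. unfold indR. destruct (Rlt_dec 0 x); lra. Qed.
Lemma onedir M P Q c : (2 <= M)%nat -> is_pmf M P -> is_pmf M Q -> 0 < dTV M P Q ->
  (c = 0 \/ (c = 2 * ln 2 /\ forall a, (a < M)%nat -> Q a >= / 2 * P a)) ->
  0 < INR M * (dloc M P Q / dTV M P Q) - 1 /\
  entropy M P - entropy M Q <=
    dTV M P Q * ln (INR M * (dloc M P Q / dTV M P Q) - 1) + hbin (dTV M P Q) - c * dTV M P Q.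
Proof.
  intros HM [HP0 HP1] [HQ0 HQ1] Hd Hc.
  set (d := dTV M P Q) in *. set (D := dloc M P Q).
  set (m := fun i => Rmin (P i) (Q i)).
  set (p := fun i => P i - m i). set (q := fun i => Q i - m i).
  assert (Fc : forall i, (i < M)%nat ->
    0 <= m i /\ 0 <= p i /\ 0 <= q i /\ p i + q i = Rabs (P i - Q i) /\
    indR (p i) + indR (q i) <= 1 /\ p i <= D /\ q i <= D /\
    (c = 0 \/ (c = 2 * ln 2 /\ p i <= m i))).
  { intros i Hi. pose proof (HP0 i Hi). pose proof (HQ0 i Hi).
    pose proof (dloc_ge M P Q i Hi). fold D in H1.
    unfold p, q, m. destruct (Rle_dec (P i) (Q i)).
    - rewrite Rmin_left by auto. rewrite Rabs_left1 in H1 |- * by lra.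
      replace (P i - P i) with 0 by ring. unfold indR at 1.
      destruct (Rlt_dec 0 0); [lra|]. pose proof (indR_range (Q i - P i)).
      repeat split; try lra. all: try (destruct Hc as [Hc|[Hc _]]; [left|right]; lra).
    - rewrite Rmin_right by lra. rewrite Rabs_right in H1 |- * by lra.
      replace (Q i - Q i) with 0 by ring. unfold indR at 2.
      destruct (Rlt_dec 0 0); [lra|]. pose proof (indR_range (P i - Q i)).
      repeat split; try lra. all: try (destruct Hc as [Hc|[Hc Hr]]; [left|right]; auto;
      specialize (Hr i Hi); split; [auto|lra]). }
  set (k := sumR M (fun i => indR (p i))). set (l := sumR M (fun i => indR (q i))).
  assert (Sp_q : sumR M p + sumR M q = 2 * d).
  { rewrite <- sumR_plus. unfold d, dTV.
    rewrite (sumR_ext M (fun i => p i + q i) (fun i => Rabs (P i - Q i))). lra.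
    intros i Hi; apply (Fc i Hi). }
  assert (Spq : sumR M p - sumR M q = 0).
  { unfold Rminus. rewrite <- sumR_opp, <- sumR_plus.
    rewrite (sumR_ext M _ (fun i => P i + - Q i)).
    rewrite sumR_plus, sumR_opp. lra. intros i Hi; unfold p, q; ring. }
  assert (Sp : sumR M p = d) by lra. assert (Sq : sumR M q = d) by lra.
  assert (Sm : sumR M m = 1 - d).
  { rewrite <- Sp, <- HP1. apply Rplus_eq_reg_r with (sumR M p).
    rewrite <- sumR_plus. ring_simplify. apply sumR_ext. intros i _. unfold p. ring. }
  assert (Hm0 : 0 <= sumR M m).
  { replace 0 with (sumR M (fun _ => 0)) by (rewrite sumR_const; lra).
    apply sumR_le; intros; apply (Fc i H). }
  assert (Hd1 : d <= 1) by lra.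
  assert (HkD : d <= k * D).
  { rewrite <- Sp. unfold k. rewrite Rmult_comm, <- sumR_scal. apply sumR_le.
    intros i Hi. destruct (Fc i Hi) as (_&H1&_&_&_&H2&_). rewrite Rmult_comm; apply indR_le; auto. }
  assert (HlD : d <= l * D).
  { rewrite <- Sq. unfold l. rewrite Rmult_comm, <- sumR_scal. apply sumR_le.
    intros i Hi. destruct (Fc i Hi) as (_&_&H1&_&_&_&H2&_). rewrite Rmult_comm; apply indR_le; auto. }
  assert (Hkl : k + l <= INR M).
  { unfold k, l. rewrite <- sumR_plus. replace (INR M) with (sumR M (fun _ => 1)) by (rewrite sumR_const; lra).
    apply sumR_le. intros i Hi; apply (Fc i Hi). }
  assert (Hk0 : 0 <= k).
  { replace 0 with (sumR M (fun _ => 0)) by (rewrite sumR_const; lra).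
    apply sumR_le; intros; apply indR_range. }
  assert (Hl0 : 0 <= l).
  { replace 0 with (sumR M (fun _ => 0)) by (rewrite sumR_const; lra).
    apply sumR_le; intros; apply indR_range. }
  assert (HD0 : 0 <= D).
  { unfold D. eapply Rle_trans. apply Rabs_pos. apply (dloc_ge M P Q 0). lia. }
  assert (HkDpos : 0 < k * D) by lra.
  assert (HDpos : 0 < D) by (destruct HD0; auto; subst; rewrite <- H in HkDpos; lra).
  assert (Hkpos : 0 < k) by (destruct Hk0; auto; subst; rewrite <- H in HkDpos; lra).
  set (t := k / d). assert (Ht : 0 < t) by (apply Rdiv_lt_0_compat; lra).
  set (L1 := - ln (1 - d)). set (L2 := - ln d).
  set (g := fun i => / t * indR (p i) + (ln t - 1 - c) * p i + (ln D + L2) * q i + L1 * m i).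
  assert (Hpt : forall i, (i < M)%nat -> negxlogx (P i) - negxlogx (Q i) <= g i).
  { intros i Hi. destruct (Fc i Hi) as (H0m&H0p&H0q&_&_&HpD&HqD&Hc').
    replace (P i) with (m i + p i) by (unfold p; ring).
    replace (Q i) with (m i + q i) by (unfold q; ring).
    assert (A : negxlogx (m i + p i) <= negxlogx (m i) + negxlogx (p i) - c * p i).
    { destruct Hc' as [->|[-> Hr]]. rewrite Rmult_0_l, Rminus_0_r; apply lemA; auto.
      apply lemA2; auto. }
    assert (B : negxlogx (m i) + negxlogx (q i) - negxlogx (m i + q i) <= m i * L1 + q i * L2).
    { apply lemB; auto. rewrite <- Sm. apply sumR_term_le; auto. intros j Hj; apply (Fc j Hj).
      rewrite <- Sq. apply sumR_term_le; auto. intros j Hj; apply (Fc j Hj). }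
    pose proof (lemC1 (p i) t H0p Ht). pose proof (lemC2 (q i) D H0q HqD HDpos).
    unfold g. unfold Rdiv in H. nra. }
  assert (HS : entropy M P - entropy M Q <= sumR M g).
  { unfold entropy, Rminus. rewrite <- sumR_opp, <- sumR_plus. apply sumR_le.
    intros i Hi. specialize (Hpt i Hi). lra. }
  unfold g in HS. rewrite !sumR_plus, !sumR_scal in HS.
  fold k in HS. rewrite Sp, Sq, Sm in HS.
  assert (Hkt : / t * k = d) by (unfold t; field; lra).
  assert (Hh : hbin d = d * L2 + (1 - d) * L1).
  { unfold hbin, L1, L2. rewrite !nx_eq by lra. ring. }
  assert (Hln : ln t + ln D = ln (k * D / d)).
  { unfold t. rewrite <- ln_mult by (try apply Rdiv_lt_0_compat; lra). f_equal. field; lra. }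
  assert (Hcmp : k * D / d <= INR M * (D / d) - 1).
  { apply Rmult_le_reg_r with d; auto. unfold Rdiv.
    replace (k * D * / d * d) with (k * D) by (field; lra).
    replace ((INR M * (D * / d) - 1) * d) with (INR M * D - d) by (field; lra). nra. }
  assert (Hpos : 0 < k * D / d) by (apply Rdiv_lt_0_compat; lra).
  split. lra.
  assert (ln (k * D / d) <= ln (INR M * (D / d) - 1)) by (apply ln_le_mono; lra).
  rewrite Hh. nra.
Qed.

Lemma dTV_sym M P Q : dTV M Q P = dTV M P Q.
Proof. unfold dTV, sumR. f_equal. f_equal. apply map_ext. intros; apply Rabs_minus_sym. Qed.

Lemma dloc_sym M P Q : dloc M Q P = dloc M P Q.
Proof. unfold dloc. f_equal. apply map_ext. intros; apply Rabs_minus_sym. Qed.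

Theorem theorem4 (M : nat) (P Q : nat -> R)
  (hM : (2 <= M)%nat) (hP : is_pmf M P) (hQ : is_pmf M Q)
  (hTV : 0 < dTV M P Q) :
  let alpha := dloc M P Q / dTV M P Q in
  Rabs (entropy M P - entropy M Q)
    <= dTV M P Q * ln (INR M * alpha - 1) + hbin (dTV M P Q)
  /\
  ((forall a, (a < M)%nat -> Q a >= / 2 * P a /\ P a >= / 2 * Q a) ->
   Rabs (entropy M P - entropy M Q)
    <= dTV M P Q * ln ((INR M * alpha - 1) / 4) + hbin (dTV M P Q)).
Proof.
  intros alpha. unfold alpha.
  assert (hTV' : 0 < dTV M Q P) by (rewrite dTV_sym; auto).
  split.
  - destruct (onedir M P Q 0 hM hP hQ hTV (or_introl eq_refl)) as [_ H1].
    destruct (onedir M Q P 0 hM hQ hP hTV' (or_introl eq_refl)) as [_ H2].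
    rewrite dTV_sym, dloc_sym in H2. apply Rabs_le. lra.
  - intros Hr.
    destruct (onedir M P Q (2 * ln 2) hM hP hQ hTV
      (or_intror (conj eq_refl (fun a Ha => proj1 (Hr a Ha))))) as [Hx H1].
    destruct (onedir M Q P (2 * ln 2) hM hQ hP hTV'
      (or_intror (conj eq_refl (fun a Ha => proj2 (Hr a Ha))))) as [_ H2].
    rewrite dTV_sym, dloc_sym in H2.
    assert (E : ln ((INR M * (dloc M P Q / dTV M P Q) - 1) / 4)
               = ln (INR M * (dloc M P Q / dTV M P Q) - 1) - 2 * ln 2).
    { unfold Rdiv at 1. rewrite ln_mult, ln_Rinv by lra.
      replace 4 with (2 * 2) by ring. rewrite ln_mult by lra. ring. }
    rewrite E. apply Rabs_le. lra.
Qed.
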